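(* With $S$, $\hat f^i$, $\mathbf{K}$, $d_S$, $M(v)$ as in the context, let $v\in M_\mathbf{K}$ be an archimedean place. Then for every $\ell\ge1$ and every sequence $g^1,\dots,g^\ell\in S$, the endomorphism $\hat w=\hat g^\ell\circ\cdots\circ\hat g^1$ of $\mathbb{A}^{m+1}$ satisfies $\log|\hat w|_v\le 2\log(M(v))\,d_S^\ell+\log(m\,d_S^m)\,d_S^{2\ell}$.
   Context: For a number field $\mathbf{K}$, $M_\mathbf{K}$ is its set of places, with absolute values normalized by $|x|_v=|{\mathrm{Norm}}_{\mathbf{K}_v/\mathbf{Q}_p}(x)|_p^{1/[\mathbf{K}:\mathbf{Q}]}$ for $v$ above $p$ (prime or $\infty$). For $f=\sum_Ia_I\mathbf{x}^I\in\mathbf{K}[x_0,\dots,x_m]$, $|f|_v=\max_I|a_I|_v$; for $\hat f=(f_0,\dots,f_m)$, $|\hat f|_v=\max_i|f_i|_v$. Setup: $S=\{f^1,\dots,f^s\}$ is a finite symmetric subset of ${\sf{Bir}}(\mathbb{P}^m_{\overline{\mathbf{Q}}})$; each $f^i=[f^i_0:\dots:f^i_m]$ with $f^i_j$ homogeneous of degree $d_i=\deg f^i$ without common factor, normalized so that some coefficient equals $1$; $\hat f^i=(f^i_0,\dots,f^i_m)$. $\mathbf{K}$ is generated by all coefficients of the $f^i_j$; $M(v)=\max_i|\hat f^i|_v$; $d_S=\max\{2,d_1,\dots,d_s\}$. *)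

(* Defs.v *)
From Stdlib Require Import ClassicalEpsilon.
From HB Require Import structures.
From mathcomp Require Import all_boot all_order all_algebra all_field.
Set Implicit Arguments. Unset Strict Implicit. Unset Printing Implicit Defensive.
Import Order.TTheory GRing.Theory Num.Theory.
Local Open Scope ring_scope.

(* mpoly R n = R[x_0, ..., x_(n-1)]; mpoly R n.+1 = (mpoly R n)[x_n].          *)
Fixpoint mpoly (R : idomainType) (n : nat) : idomainType :=
  match n with
  | 0 => R
  | n'.+1 => {poly mpoly R n'}
  end.

(* the variable x_i in mpoly R n (0 if i >= n, never used that way) *)
Fixpoint mvar (R : idomainType) (n : nat) : nat -> mpoly R n :=
  match n return nat -> mpoly R n with
  | 0 => fun _ => 0
  | n'.+1 => fun i => if i == n' then 'X else (@mvar R n' i)%:P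
  end.

Fixpoint mcoefs (R : idomainType) (n : nat) : mpoly R n -> seq R :=
  match n return mpoly R n -> seq R with
  | 0 => fun c => [:: c]
  | n'.+1 => fun p => flatten [seq mcoefs (p : {poly mpoly R n'})`_i | i <- iota 0 (size p)]
  end.

(* homogeneity of total degree d (the zero polynomial is homogeneous of any degree) *)
Fixpoint mhomog (R : idomainType) (n : nat) : nat -> mpoly R n -> Prop :=
  match n return nat -> mpoly R n -> Prop with
  | 0 => fun d c => d = 0%N \/ c = 0
  | n'.+1 => fun d p => forall j : nat,
      (p : {poly mpoly R n'})`_j = 0 \/ ((j <= d)%N /\ mhomog (d - j) (p : {poly mpoly R n'})`_j)
  end.

Fixpoint mconst (R : idomainType) (k : nat) : R -> mpoly R k :=
  match k return R -> mpoly R k with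
  | 0 => fun c => c
  | k'.+1 => fun c => (mconst k' c)%:P
  end.

Fixpoint msubst (R : idomainType) (k n : nat) : mpoly R n -> (nat -> mpoly R k) -> mpoly R k :=
  match n return mpoly R n -> (nat -> mpoly R k) -> mpoly R k with
  | 0 => fun c _ => mconst k c
  | n'.+1 => fun p q =>
      \sum_(i < size (p : {poly mpoly R n'})) msubst (p : {poly mpoly R n'})`_i q * q n' ^+ i
  end.

Definition hmap (R : idomainType) (m : nat) := 'I_m.+1 -> mpoly R m.+1.

Definition hid (R : idomainType) (m : nat) : hmap R m := fun j => @mvar R m.+1 j.

Definition hcomp (R : idomainType) (m : nat) (F G : hmap R m) : hmap R m :=
  fun j => msubst (F j) (fun i => G (inord i)).

(* hat g^l o ... o hat g^1 for the word [:: g^1; ...; g^l] *)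
Definition hword (R : idomainType) (m : nat) (w : seq (hmap R m)) : hmap R m :=
  foldl (fun W F => hcomp F W) (@hid R m) w.

Definition mdvd (R : idomainType) (n : nat) (h p : mpoly R n) := exists q, p = q * h.
Definition no_common_factor (R : idomainType) (m : nat) (F : hmap R m) :=
  forall h : mpoly R m.+1, (forall j, mdvd h (F j)) -> h \is a GRing.unit.

Definition hhomog (R : idomainType) (m : nat) (d : nat) (F : hmap R m) :=
  forall j, mhomog d (F j).

(* G o F = id as rational maps of P^m, i.e. G(F(x)) = h(x) * x with h <> 0 *)
Definition left_inverse (R : idomainType) (m : nat) (G F : hmap R m) :=
  exists2 h : mpoly R m.+1, h != 0 & forall j, hcomp G F j = h * @hid R m j.

Definition bir_inverse (R : idomainType) (m : nat) (G F : hmap R m) :=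
  left_inverse G F /\ left_inverse F G.

Definition birational (R : idomainType) (m : nat) (F : hmap R m) :=
  exists e (G : hmap R m), [/\ hhomog e G, no_common_factor G & bir_inverse G F].

Definition hcoefs (R : idomainType) (m : nat) (F : hmap R m) : seq R :=
  flatten [seq mcoefs (F j) | j <- enum 'I_m.+1].

(* For a number field L (finite extension of Q), a subfield K of L and an
   embedding sigma : L -> C (C = algC), the archimedean place v of K induced by
   sigma has |x|_v = |Norm_(K_v/R)(x)|^(1/[K:Q]) = |sigma x|^(n_v/[K:Q]),
   with n_v = 1 if sigma(K) is real and n_v = 2 otherwise. *)
Definition local_deg (L : fieldExtType rat) (K : {vspace L}) (sigma : {rmorphism L -> algC}) : nat :=
  if excluded_middle_informative (forall x, x \in K -> sigma x \is Num.real) then 1%N else 2%N.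

Definition absv (L : fieldExtType rat) (K : {vspace L}) (sigma : {rmorphism L -> algC}) (x : L) : algC :=
  ((\dim K).-root `|sigma x|) ^+ local_deg K sigma.

Definition hnormv (L : fieldExtType rat) (K : {vspace L}) (sigma : {rmorphism L -> algC})
  (m : nat) (F : hmap L m) : algC :=
  \big[Num.max/0]_(c <- hcoefs F) absv K sigma c.

(* Main.v *)
Require Import Defs.
From Stdlib Require Import ClassicalEpsilon.
From HB Require Import structures.
From mathcomp Require Import all_boot all_order all_algebra all_field.
From mathcomp Require Import zify.
Import Order.TTheory GRing.Theory Num.Theory.
Local Open Scope ring_scope.

Fixpoint nu (L : fieldExtType rat) (sg : {rmorphism L -> algC}) (n : nat) : mpoly L n -> algC :=
  match n return mpoly L n -> algC with
  | 0 => fun c => `|sg c|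
  | n'.+1 => fun p => \sum_(i < size (p : {poly mpoly L n'})) @nu L sg n' (p : {poly mpoly L n'})`_i
  end.
Arguments nu {L} sg {n}.

Lemma nu_ge0 (L : fieldExtType rat) (sg : {rmorphism L -> algC}) n (p : mpoly L n) : 0 <= nu sg p.
Proof.
elim: n p => [|n IH] p /=; first exact: normr_ge0.
by apply: sumr_ge0 => i _.
Qed.

Lemma nu0 (L : fieldExtType rat) (sg : {rmorphism L -> algC}) n : nu sg (0 : mpoly L n) = 0.
Proof.
case: n => [|n] /=; first by rewrite rmorph0 normr0.
by rewrite size_poly0 big_ord0.
Qed.

Lemma nu_ext (L : fieldExtType rat) (sg : {rmorphism L -> algC}) n (p : {poly mpoly L n}) N : (size p <= N)%N ->
  nu sg (p : mpoly L n.+1) = \sum_(i < N) nu sg p`_i.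
Proof.
move=> hN /=; rewrite (big_ord_widen N (fun i => nu sg p`_i) hN) big_mkcond /=.
apply: eq_bigr => i _; case: ifP => // /negbT; rewrite -leqNgt => hi.
by rewrite nth_default // nu0.
Qed.

Lemma nu_add (L : fieldExtType rat) (sg : {rmorphism L -> algC}) n (p q : mpoly L n) : nu sg (p + q) <= nu sg p + nu sg q.
Proof.
elim: n p q => [|n IH] p q; first by rewrite /= rmorphD ler_normD.
set N := maxn (size (p : {poly mpoly L n})) (size (q : {poly mpoly L n})).
rewrite (@nu_ext _ _ _ (p + q) N) ?(@nu_ext _ _ _ p N) ?(@nu_ext _ _ _ q N);
  last 3 first.
- by rewrite leq_maxr.
- by rewrite leq_maxl.
- by rewrite (leq_trans (size_polyD _ _)).
rewrite -big_split /=; apply: ler_sum => i _; rewrite coefD; exact: IH.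
Qed.

Lemma nu_sum (L : fieldExtType rat) (sg : {rmorphism L -> algC}) n N (F : 'I_N -> mpoly L n) :
  nu sg (\sum_(i < N) F i) <= \sum_(i < N) nu sg (F i).
Proof.
elim: N F => [|N IH] F; first by rewrite !big_ord0 nu0.
rewrite !big_ord_recr /=; apply: le_trans (nu_add _ _ _ _ _) _.
by rewrite lerD2r IH.
Qed.

Lemma nu_cX (L : fieldExtType rat) (sg : {rmorphism L -> algC}) n (c : mpoly L n) k :
  nu sg ((c *: 'X^k : {poly mpoly L n}) : mpoly L n.+1) = nu sg c.
Proof.
rewrite (@nu_ext _ _ _ _ k.+1); last first.
  by rewrite (leq_trans (size_scale_leq _ _)) // size_polyXn.
rewrite big_ord_recr /= coefZ coefXn eqxx mulr1 big1 ?add0r // => i _.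
by rewrite coefZ coefXn (ltn_eqF (ltn_ord i)) mulr0 nu0.
Qed.

Lemma poly_expand (R : idomainType) (p : {poly R}) :
  p = \sum_(i < size p) p`_i *: 'X^i.
Proof. by rewrite -poly_def coefK. Qed.

Lemma nu_mul (L : fieldExtType rat) (sg : {rmorphism L -> algC}) n (p q : mpoly L n) :
  nu sg (p * q) <= nu sg p * nu sg q.
Proof.
elim: n p q => [|n IH] p q; first by rewrite /= rmorphM normrM.
have -> : p * q = (\sum_(i < size (p : {poly mpoly L n})) \sum_(j < size (q : {poly mpoly L n}))
   (((p : {poly mpoly L n})`_i * (q : {poly mpoly L n})`_j) *: 'X^(i + j) : {poly mpoly L n})).
  rewrite {1}(@poly_expand (mpoly L n) p) {1}(@poly_expand (mpoly L n) q) big_distrl /=.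
  apply: eq_bigr => i _; rewrite big_distrr /=; apply: eq_bigr => j _.
  by rewrite -scalerAl -scalerAr scalerA exprD.
apply: le_trans (nu_sum _ _ (n.+1) _ _) _.
rewrite [X in _ <= X]/= big_distrl; apply: ler_sum => i _.
apply: le_trans (nu_sum _ _ (n.+1) _ _) _.
rewrite big_distrr; apply: ler_sum => j _.
rewrite (nu_cX _ sg _ (p`_i * q`_j) (i + j)). exact: (IH p`_i q`_j).
Qed.

Lemma nu1 (L : fieldExtType rat) (sg : {rmorphism L -> algC}) n :
  nu sg (1 : mpoly L n) = 1.
Proof.
elim: n => [|n IH]; first by rewrite /= rmorph1 normr1.
by rewrite /= size_poly1 big_ord1 coef1 eqxx IH.
Qed.

Lemma nu_exp (L : fieldExtType rat) (sg : {rmorphism L -> algC}) n (p : mpoly L n) k :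
  nu sg (p ^+ k) <= nu sg p ^+ k.
Proof.
elim: k => [|k IH]; first by rewrite !expr0 nu1.
rewrite !exprS; apply: le_trans (nu_mul _ _ _ _ _) _.
by rewrite ler_wpM2l ?nu_ge0.
Qed.

Lemma nu_mconst (L : fieldExtType rat) (sg : {rmorphism L -> algC}) k (c : L) :
  nu sg (mconst k c) = `|sg c|.
Proof.
elim: k => [|k IH] //.
change (nu sg (((mconst k c)%:P : {poly mpoly L k}) : mpoly L k.+1) = `|sg c|).
rewrite (@nu_ext _ _ _ _ 1); last exact: size_polyC_leq1.
by rewrite big_ord1 coefC eqxx IH.
Qed.

Lemma nu_mvar (L : fieldExtType rat) (sg : {rmorphism L -> algC}) n i :
  (i < n)%N -> nu sg (mvar L n i) = 1.
Proof.
elim: n => [|n IH] // hi.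
change (nu sg ((if i == n then 'X else (mvar L n i)%:P : {poly mpoly L n}) : mpoly L n.+1) = 1).
case: eqP => [_|/eqP hne].
  rewrite (@nu_ext _ _ _ _ 2) ?size_polyX //.
  by rewrite big_ord_recr big_ord1 /= !coefX /= nu0 nu1 add0r.
rewrite (@nu_ext _ _ _ _ 1); last exact: size_polyC_leq1.
rewrite big_ord1 coefC eqxx IH //.
by move: hi; rewrite ltnS leq_eqVlt (negbTE hne).
Qed.

Fixpoint mdle (R : idomainType) (n : nat) : nat -> mpoly R n -> Prop :=
  match n return nat -> mpoly R n -> Prop with
  | 0 => fun _ _ => True
  | n'.+1 => fun d p => forall j : nat,
      @mdle R n' (d - j) (p : {poly mpoly R n'})`_j /\ ((d < j)%N -> (p : {poly mpoly R n'})`_j = 0)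
  end.
Arguments mdle {R n}.

Lemma mdle0 (R : idomainType) n d : mdle d (0 : mpoly R n).
Proof.
elim: n d => [|n IH] d //= j; rewrite coef0; split=> //; exact: IH.
Qed.

Lemma mhomog_mdle (R : idomainType) n d (p : mpoly R n) : mhomog d p -> mdle d p.
Proof.
elim: n d p => [|n IH] d p //= H j.
case: (H j) => [->|[hj hh]]; first by split=> //; exact: mdle0.
split; first exact: IH.
by move=> hd; move: (leq_ltn_trans hj hd); rewrite ltnn.
Qed.

Lemma mdle_mono (R : idomainType) n d d' (p : mpoly R n) : mdle d p -> (d <= d')%N -> mdle d' p.
Proof.
elim: n d d' p => [|n IH] d d' p //= H hd j.
case: (H j) => h1 h2; split.
  by apply: IH h1 _; rewrite leq_sub2r.
by move=> hj; apply: h2; exact: leq_ltn_trans hd hj.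
Qed.

Lemma aux_pow (a B : algC) d i : ((d < i)%N -> a = 0) -> a * B ^+ (d - i) * B ^+ i <= a * B ^+ d.
Proof.
move=> h; case: (ltnP d i) => hid; first by rewrite h // !mul0r.
by rewrite -mulrA -exprD subnK.
Qed.

Lemma nu_msubst (L : fieldExtType rat) (sg : {rmorphism L -> algC}) n (p : mpoly L n) d k
  (q : nat -> mpoly L k) (B : algC) :
  mdle d p -> 1 <= B -> (forall i, (i < n)%N -> nu sg (q i) <= B) ->
  nu sg (msubst p q) <= nu sg p * B ^+ d.
Proof.
have B0 : 1 <= B -> 0 <= B by move=> h; exact: le_trans ler01 h.
elim: n p d => [|n IH] p d Hd HB Hq.
  rewrite /= nu_mconst ler_peMr ?normr_ge0 //; exact: exprn_ege1.
change (nu sg (\sum_(i < size (p : {poly mpoly L n})) msubst (p : {poly mpoly L n})`_i q * q n ^+ i)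
   <= (\sum_(i < size (p : {poly mpoly L n})) nu sg (p : {poly mpoly L n})`_i) * B ^+ d).
apply: le_trans (nu_sum _ _ _ _ _) _.
rewrite big_distrl; apply: ler_sum => i _.
apply: le_trans (nu_mul _ _ _ _ _) _.
case: (Hd i) => hd1 hd2.
have h1 := IH _ _ hd1 HB (fun j hj => Hq j (ltnW hj)).
have h2 : nu sg (q n ^+ i) <= B ^+ i.
  apply: le_trans (nu_exp _ _ _ _ _) _.
  apply: lerXn2r; [by rewrite nnegrE nu_ge0 | by rewrite nnegrE B0 | exact: Hq].
apply: le_trans (ler_pM (nu_ge0 _ _ _ _) (nu_ge0 _ _ _ _) h1 h2) _.
by apply: aux_pow => hdi; rewrite hd2 // nu0.
Qed.

Lemma nu_mcoefs (L : fieldExtType rat) (sg : {rmorphism L -> algC}) n (p : mpoly L n) :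
  nu sg p = \sum_(c <- mcoefs p) `|sg c|.
Proof.
elim: n p => [|n IH] p; first by rewrite /= big_seq1.
change (\sum_(i < size (p : {poly mpoly L n})) nu sg (p : {poly mpoly L n})`_i =
  \sum_(c <- flatten [seq mcoefs (p : {poly mpoly L n})`_i | i <- iota 0 (size (p : {poly mpoly L n}))]) `|sg c|).
rewrite big_flatten big_map.
rewrite -(big_mkord xpredT (fun i => nu sg (p : {poly mpoly L n})`_i)) /index_iota subn0.
by apply: eq_bigr => i _; exact: IH.
Qed.

Lemma leq_expn a b n : (a <= b)%N -> (a ^ n <= b ^ n)%N.
Proof.
move=> h; elim: n => [|n IH]; first by rewrite !expn0.
by rewrite !expnS leq_mul.
Qed.

Lemma sumn_map_le (s : seq nat) (F : nat -> nat) b :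
  (forall i, F i <= b)%N -> (sumn [seq F i | i <- s] <= size s * b)%N.
Proof.
move=> h; elim: s => [|x s IH] //=.
by rewrite mulSn leq_add.
Qed.

Lemma size_mcoefs (R : idomainType) n d (p : mpoly R n) :
  mdle d p -> (size (mcoefs p) <= d.+1 ^ n)%N.
Proof.
elim: n d p => [|n IH] d p //= H.
rewrite size_flatten /shape -map_comp.
apply: leq_trans (@sumn_map_le _ _ (d.+1 ^ n) _) _.
  move=> i /=; apply: leq_trans (IH _ _ (proj1 (H i))) _.
  by apply: leq_expn; rewrite ltnS leq_subr.
rewrite size_iota expnS leq_mul2r; apply/orP; right.
apply/leq_sizeP => j hj; apply: (proj2 (H j)); exact: hj.
Qed.

Lemma word_bound (L : fieldExtType rat) (sg : {rmorphism L -> algC}) m s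
  (f : 'I_s -> hmap L m) (A : algC) dS (g : seq 'I_s) (W : hmap L m) e :
  1 <= A -> (forall x j, mdle dS (f x j) /\ nu sg (f x j) <= A) ->
  (forall j, nu sg (W j) <= A ^+ e) ->
  forall j, nu sg (foldl (fun W F => hcomp F W) W [seq f i | i <- g] j)
     <= A ^+ (iter (size g) (fun e => (dS * e).+1)%N e).
Proof.
move=> A1 Hf; elim: g W e => [|x g IH] W e HW j; first exact: HW.
rewrite [size _]/= iterSr; apply: IH => {}j.
have Ae1 : 1 <= A ^+ e by exact: exprn_ege1.
case: (Hf x j) => h1 h2.
rewrite /hcomp; apply: le_trans (nu_msubst _ _ _ _ _ _ _ _ h1 Ae1 (fun i _ => HW _)) _.
rewrite exprS -exprM mulnC; apply: ler_wpM2r => //.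
by rewrite exprn_ge0 // (le_trans ler01).
Qed.

Lemma iter_bound dS k : (2 <= dS)%N -> ((iter k (fun e => (dS * e).+1) 0).+1 <= dS ^ k)%N.
Proof.
move=> h2; elim: k => [|k IH] //=.
rewrite expnS; move: IH; set E := iter _ _ _; set X := (dS ^ k)%N => IH.
by nia.
Qed.
Lemma ratr_real (k : rat) : (ratr k : algC) \is Num.real.
Proof. exact: rpred_rat. Qed.

Lemma dimK_local (L : fieldExtType rat) (X : seq L) (sg : {rmorphism L -> algC}) :
  let K := (<<1 & X>>)%VS in
  (0 < local_deg K sg)%N /\ (local_deg K sg <= \dim K)%N.
Proof.
move=> K.
have s1 : (1 <= K)%VS by exact: sub1_agenv.
have d1 : (1 <= \dim K)%N by have := dimvS s1; rewrite dimv1.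
rewrite /local_deg; case: excluded_middle_informative => // hn; split=> //.
case: (leqP 2 (\dim K)) => // hlt.
exfalso; apply: hn => x xK.
have eK : (1%VS : {vspace L}) = K.
  by apply/eqP; rewrite eqEdim s1 dimv1 /= -ltnS.
move: xK; rewrite -eK => /vlineP [k ->].
by rewrite rmorphZ_num rmorph1 mulr1 ratr_real.
Qed.

Definition gf (D nd : nat) (r : algC) := (D.-root r) ^+ nd.


Lemma gf0 D nd : (0 < D)%N -> (0 < nd)%N -> gf D nd 0 = 0.
Proof. by move=> hD hn; rewrite /gf rootC0 expr0n; case: nd hn. Qed.

Lemma gf1 D nd : (0 < D)%N -> gf D nd 1 = 1.
Proof. by move=> hD; rewrite /gf rootC1 // expr1n. Qed.

Lemma gf_ge0 D nd r : (0 < D)%N -> 0 <= r -> 0 <= gf D nd r.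
Proof. by move=> hD hr; rewrite /gf exprn_ge0 // rootC_ge0. Qed.

Lemma gf_mono D nd a b : (0 < D)%N -> 0 <= a -> a <= b -> gf D nd a <= gf D nd b.
Proof.
move=> hD ha hab; have hb := le_trans ha hab.
rewrite /gf; apply: lerXn2r; rewrite ?nnegrE ?rootC_ge0 //.
by rewrite ler_rootC // nnegrE.
Qed.

Lemma gf_mul D nd a b : 0 <= a -> gf D nd (a * b) = gf D nd a * gf D nd b.
Proof. by move=> ha; rewrite /gf rootCMl // exprMn. Qed.

Lemma gf_exp D nd a k : (0 < D)%N -> 0 <= a -> gf D nd (a ^+ k) = gf D nd a ^+ k.
Proof. by move=> hD ha; rewrite /gf rootCX // -!exprM mulnC. Qed.

Lemma gf_le_self D nd a : (0 < D)%N -> (nd <= D)%N -> 1 <= a -> gf D nd a <= a.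
Proof.
move=> hD hnd ha; rewrite /gf.
have r1 : 1 <= D.-root a by rewrite rootC_ge1.
apply: le_trans (ler_weXn2l r1 hnd) _.
by rewrite rootCK.
Qed.

Lemma max_facts (a b : algC) : 0 <= a -> 0 <= b ->
  [/\ a <= Num.max a b, b <= Num.max a b, 0 <= Num.max a b &
     Num.max a b = a \/ Num.max a b = b].
Proof.
move=> ha hb; case: (real_leP (ger0_real ha) (ger0_real hb)) => h.
  by split; [exact: h | exact: lexx | exact: hb | right].
by split; [exact: lexx | exact: ltW | exact: ha | left].
Qed.

Lemma bigmax_ge0 (I : Type) (r : seq I) (F : I -> algC) :
  (forall i, 0 <= F i) -> 0 <= \big[Num.max/0]_(i <- r) F i.
Proof.
move=> hF; elim: r => [|x r IH]; first by rewrite big_nil.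
by rewrite big_cons; case: (max_facts _ _ (hF x) IH).
Qed.

Lemma bigmax_le (I : eqType) (r : seq I) (F : I -> algC) x :
  (forall i, 0 <= F i) -> 0 <= x -> (forall i, i \in r -> F i <= x) ->
  \big[Num.max/0]_(i <- r) F i <= x.
Proof.
move=> hF hx; elim: r => [|y r IH] H; first by rewrite big_nil.
rewrite big_cons; case: (max_facts _ _ (hF y) (bigmax_ge0 _ r F hF)) => _ _ _ [->|->].
  by apply: H; rewrite mem_head.
by apply: IH => i hi; apply: H; rewrite in_cons hi orbT.
Qed.

Lemma le_bigmax (I : eqType) (r : seq I) (F : I -> algC) i :
  (forall i, 0 <= F i) -> i \in r -> F i <= \big[Num.max/0]_(i <- r) F i.
Proof.
move=> hF; elim: r => [|y r IH] //.
rewrite in_cons big_cons; case: (max_facts _ _ (hF y) (bigmax_ge0 _ r F hF)) => h1 h2 _ _.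
case/orP => [/eqP ->|hi] //.
exact: le_trans (IH hi) h2.
Qed.

Lemma bigmax_cases (I : eqType) (r : seq I) (F : I -> algC) :
  (forall i, 0 <= F i) -> \big[Num.max/0]_(i <- r) F i = 0 \/
   exists2 i, i \in r & \big[Num.max/0]_(i <- r) F i = F i.
Proof.
move=> hF; elim: r => [|y r IH]; first by left; rewrite big_nil.
rewrite big_cons; case: (max_facts _ _ (hF y) (bigmax_ge0 _ r F hF)) => _ _ _ [->|->].
  by right; exists y; rewrite ?mem_head.
case: IH => [->|[i hi ->]]; first by left.
by right; exists i; rewrite // in_cons hi orbT.
Qed.

Lemma sum_le_size (I : eqType) (r : seq I) (F : I -> algC) x :
  (forall c, c \in r -> F c <= x) -> \sum_(c <- r) F c <= (size r)%:R * x.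
Proof.
elim: r => [|y r IH] h; first by rewrite big_nil mul0r.
rewrite big_cons /= -addn1 natrD mulrDl mul1r addrC lerD //.
  by apply: IH => c hc; apply: h; rewrite in_cons hc orbT.
by apply: h; rewrite mem_head.
Qed.

Lemma le_sum_mem (I : eqType) (r : seq I) (F : I -> algC) c :
  (forall c, 0 <= F c) -> c \in r -> F c <= \sum_(x <- r) F x.
Proof.
move=> h; elim: r => [|y r IH] //; rewrite in_cons big_cons.
case/orP => [/eqP ->|hc]; first by rewrite lerDl sumr_ge0.
by apply: le_trans (IH hc) _; rewrite lerDr.
Qed.

Lemma aux4 (E Y : nat) : (E < Y)%N -> (4 * E <= Y * Y)%N.
Proof. case: Y => [|[|Y]] h; [by [] | by move: h; rewrite ltnS leqn0 => /eqP -> | nia]. Qed.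

Theorem lemma3p7 (L : fieldExtType rat) (m s : nat)
  (f : 'I_s -> hmap L m) (d : 'I_s -> nat)
  (hm : (1 <= m)%N)
  (Hhom : forall i, hhomog (d i) (f i))
  (Hncf : forall i, no_common_factor (f i))
  (Hnorm : forall i, 1 \in hcoefs (f i))
  (Hbir : forall i, birational (f i))
  (Hsym : forall i, exists j, bir_inverse (f j) (f i))
  (sigma : {rmorphism L -> algC})
  (l : nat) (g : seq 'I_s) (hl : (1 <= l)%N) (hsize : size g = l) :
  let K := (<<1 & flatten [seq hcoefs (f i) | i <- enum 'I_s]>>)%VS in
  let M := \big[Num.max/0]_(i < s) hnormv K sigma (f i) in
  let dS := maxn 2 (\max_(i < s) d i) in
  hnormv K sigma (hword [seq f i | i <- g])
    <= M ^+ (2 * dS ^ l) * ((m * dS ^ m)%N)%:R ^+ (dS ^ (2 * l)).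
Proof.
cbv zeta.
set K := (<<1 & _>>)%VS.
set M := \big[Num.max/0]_(i < s) _.
set dS := maxn 2 _.
have [hnd0 hndD] := dimK_local L (flatten [seq hcoefs (f i) | i <- enum 'I_s]) sigma.
rewrite -/K in hnd0 hndD.
set D := \dim K in hndD; set nd := local_deg K sigma in hnd0 hndD.
have hD : (0 < D)%N by exact: leq_trans hnd0 hndD.
have habs : forall x, absv K sigma x = gf D nd `|sigma x| by [].
have dS2 : (2 <= dS)%N by exact: leq_maxl.
have [i0 _] : exists i0 : 'I_s, True.
  by case: g hsize => [|x g'] /= h; [rewrite -h in hl | exists x].
pose Mpsi := \big[Num.max/0]_(i < s) \big[Num.max/0]_(c <- hcoefs (f i)) `|sigma c|.
have psi_le : forall i c, c \in hcoefs (f i) -> `|sigma c| <= Mpsi.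
  move=> i c hc.
  apply: le_trans (le_bigmax _ (hcoefs (f i)) (fun c => `|sigma c|) c _ hc) _ => //.
  apply: (le_bigmax _ (index_enum 'I_s)
     (fun i => \big[Num.max/0]_(c <- hcoefs (f i)) `|sigma c|) i).
    by move=> ?; exact: bigmax_ge0.
  exact: mem_index_enum.
have Mpsi1 : 1 <= Mpsi by have := psi_le i0 1 (Hnorm i0); rewrite rmorph1 normr1.
have Mpsi0 : 0 <= Mpsi by exact: le_trans ler01 Mpsi1.
pose N := (dS.+1 ^ m.+1)%N.
have N1 : (1 <= N)%N by rewrite expn_gt0.
pose A := N%:R * Mpsi.
have A1 : 1 <= A by rewrite -[1]mulr1 ler_pM // ler1n.
have Hf : forall x j, mdle dS (f x j) /\ nu sigma (f x j) <= A.
  move=> x j.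
  have hmd : mdle dS (f x j).
    apply: mdle_mono (mhomog_mdle _ _ _ _ (Hhom x j)) _.
    exact: leq_trans (leq_bigmax x) (leq_maxr _ _).
  split=> //.
  rewrite nu_mcoefs.
  have hc : forall c, c \in mcoefs (f x j) -> `|sigma c| <= Mpsi.
    move=> c hc; apply: (psi_le x c).
    rewrite /hcoefs; apply/flattenP; exists (mcoefs (f x j)) => //.
    by apply/mapP; exists j; rewrite ?mem_enum.
  apply: le_trans (sum_le_size _ _ _ _ hc) _.
  by apply: ler_wpM2r => //; rewrite ler_nat; exact: size_mcoefs.
have Hid : forall j, nu sigma (@hid L m j) <= A ^+ 0.
  by move=> j; rewrite expr0 /hid nu_mvar.
have Hw := @word_bound L sigma m s f A dS g (@hid L m) 0%N A1 Hf Hid.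
move: Hw; rewrite hsize; set E := iter l _ 0 => Hw.
have hE : (E.+1 <= dS ^ l)%N by rewrite /E; exact: iter_bound.
have M0 : 0 <= M by apply: bigmax_ge0 => i; apply: bigmax_ge0 => c; exact: gf_ge0.
have gM : gf D nd Mpsi <= M.
  have gle : forall i c, c \in hcoefs (f i) -> gf D nd `|sigma c| <= M.
    move=> i c hc; rewrite -habs.
    apply: le_trans (_ : hnormv K sigma (f i) <= M).
      apply: (le_bigmax _ (hcoefs (f i)) (absv K sigma) c) => // c'.
      exact: gf_ge0.
    apply: (le_bigmax _ (index_enum 'I_s) (fun i => hnormv K sigma (f i)) i).
      by move=> ?; apply: bigmax_ge0 => c'; exact: gf_ge0.
    exact: mem_index_enum.
  have := bigmax_cases _ (index_enum 'I_s)
     (fun i => \big[Num.max/0]_(c <- hcoefs (f i)) `|sigma c|) (fun i => bigmax_ge0 _ _ _ (fun c => normr_ge0 _)).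
  rewrite -/Mpsi; case=> [->|[i _ ->]]; first by rewrite gf0.
  have := bigmax_cases _ (hcoefs (f i)) (fun c => `|sigma c|) (fun c => normr_ge0 _).
  case=> [->|[c hc ->]]; first by rewrite gf0.
  exact: (gle i c hc).
have M1 : 1 <= M by apply: le_trans gM; rewrite -(gf1 D nd hD) gf_mono.
have final : hnormv K sigma (hword [seq f i | i <- g]) <= N%:R ^+ E * M ^+ E.
  apply: bigmax_le => //.
  - by move=> c; exact: gf_ge0.
  - by rewrite mulr_ge0 // exprn_ge0.
  move=> c /flattenP [r /mapP [j _ ->] hc].
  rewrite habs.
  have h1 : `|sigma c| <= A ^+ E.
    apply: le_trans (Hw j); rewrite nu_mcoefs.
    by apply: (le_sum_mem _ _ (fun c => `|sigma c|) c) => // ?; exact: normr_ge0.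
  apply: le_trans (gf_mono _ _ _ _ hD (normr_ge0 _) h1) _.
  rewrite gf_exp ?mulr_ge0 // gf_mul // exprMn.
  have gN0 : 0 <= gf D nd N%:R by apply: gf_ge0.
  have gP0 : 0 <= gf D nd Mpsi by apply: gf_ge0.
  apply: ler_pM; [exact: exprn_ge0 | exact: exprn_ge0 | |].
    apply: lerXn2r; [by rewrite nnegrE | by rewrite nnegrE ler0n |].
    by apply: gf_le_self; rewrite // ler1n.
  by apply: lerXn2r; [by rewrite nnegrE | by rewrite nnegrE | ].
apply: le_trans final _.
rewrite mulrC; apply: ler_pM; rewrite ?exprn_ge0 //.
- by apply: ler_weXn2l => //; lia.
rewrite -!natrX ler_nat.
set X := (m * dS ^ m)%N.
have X1 : (0 < X)%N by rewrite muln_gt0 expn_gt0; lia.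
have hN : (N <= X ^ 4)%N.
  apply: (@leq_trans (dS ^ (4 * m))).
    apply: (@leq_trans ((dS ^ 2) ^ m.+1)).
      by apply: leq_expn; rewrite expnS expn1 -addn1; nia.
    by rewrite -expnM leq_exp2l //; lia.
  by rewrite mulnC expnM; apply: leq_expn; rewrite /X leq_pmull.
apply: (@leq_trans ((X ^ 4) ^ E)); first exact: leq_expn.
rewrite -expnM leq_pexp2l //.
have eY : (dS ^ (2 * l) = dS ^ l * dS ^ l)%N by rewrite -expnD addnn -mul2n.
rewrite eY; exact: aux4 hE.
Qed.
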